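(* Let $G$ be a graph and $v\in V(G)$ with $d_G(v)\le 2$. Then $\mathbf{a}_4(G)\ge \mathbf{a}_4(G-v)$.
   Context: Graphs are finite and simple. $\mathbf{a}_4(H)$ is the coefficient of $\lambda^{\nu(H)-4}$ in $\det(\lambda\mathbf{I}-\mathbf{A}(H))$, where $\nu(H)$ is the number of vertices; equivalently, $\mathbf{a}_4(H)$ is the number of 2-matchings of $H$ minus twice the number of 4-cycles of $H$. $G-v$ is the graph obtained by deleting $v$ and its incident edges. *)

(* Defs.v *)
From mathcomp Require Import all_boot all_order all_algebra.
Set Implicit Arguments. Unset Strict Implicit. Unset Printing Implicit Defensive.
Import GRing.Theory Num.Theory.
Local Open Scope ring_scope.

(* A finite simple graph is a symmetric irreflexive relation e on a finType T.
   For S : {set T}, [adjmx e S] is the adjacency matrix of the induced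
   subgraph G[S], with vertices indexed by enum_val : 'I_#|S| -> T. *)
Definition adjmx (T : finType) (e : rel T) (S : {set T}) : 'M[int]_#|S| :=
  \matrix_(i, j) (e (enum_val i) (enum_val j))%:R.

(* a_4(G[S]) = coefficient of lambda^(nu - 4) in det(lambda I - A(G[S])),
   nu = #|S|; it is 0 when nu < 4 (no such power). *)
Definition a4 (T : finType) (e : rel T) (S : {set T}) : int :=
  if (4 <= #|S|)%N then (char_poly (adjmx e S))`_(#|S| - 4) else 0.

Definition deg (T : finType) (e : rel T) (v : T) : nat := #|[set u | e v u]|.

(* Main.v *)
Require Import Defs.
From mathcomp Require Import all_boot all_order all_algebra all_fingroup.
From mathcomp Require Import zify.
Set Implicit Arguments. Unset Strict Implicit. Unset Printing Implicit Defensive.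
Import Order.TTheory GRing.Theory Num.Theory.
Local Open Scope ring_scope.

Ltac neqs := repeat match goal with
 | H : is_true (?x != ?y) |- context [?x == ?y] => rewrite (negbTE H)
 | H : is_true (?x != ?y) |- context [?y == ?x] => rewrite (eq_sym y x) (negbTE H)
 end.

Ltac break_and := repeat match goal with H : is_true (_ && _) |- _ => case/andP: H => ? ? end.

Section Perm4.
Variable X : finType.
Implicit Types s : {perm X}.

Lemma tpE (x y z : X) : tperm x y z = if z == x then y else if z == y then x else z.
Proof. by case: tpermP => [->|->|/eqP/negbTE-> /eqP/negbTE->]; rewrite ?eqxx //; case: eqP. Qed.

Ltac tsimp := repeat (first [ progress neqs | progress (rewrite ?eqxx /=) | rewrite tpE ]).

Definition supp s := [set x | s x != x].

Lemma supp_img s x : x \in supp s -> s x \in supp s.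
Proof. rewrite !inE => H; apply: contra H => /eqP H; apply/eqP; exact: perm_inj H. Qed.

Lemma size_le_supp s (l : seq X) : uniq l -> {subset l <= supp s} -> (size l <= #|supp s|)%N.
Proof.
move=> U Sub; rewrite -(card_uniqP U); apply: subset_leq_card.
by apply/subsetP => x; exact: Sub.
Qed.

Lemma extra_elt (A : {set X}) (l : seq X) : (size l < #|A|)%N -> exists2 y, y \in A & y \notin l.
Proof.
move=> H; have: ~~ (A \subset l).
  apply: contraTN H => /subset_leq_card Hs; rewrite -leqNgt.
  exact: leq_trans Hs (card_size l).
by case/subsetPn => y Hy Hl; exists y.
Qed.

Lemma in4 s a b c d y : #|supp s| = 4 -> uniq [:: a;b;c;d] ->
  {subset [:: a;b;c;d] <= supp s} -> y \in supp s -> y \in [:: a;b;c;d].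
Proof.
move=> C U Sub Hy; apply/negPn/negP => Hn.
have U' : uniq (y :: [:: a;b;c;d]) by rewrite cons_uniq Hn U.
have Sub' : {subset (y :: [:: a;b;c;d]) <= supp s}.
  by move=> z; rewrite inE => /orP [/eqP ->|]; [exact: Hy | exact: Sub].
by have := size_le_supp U' Sub'; rewrite C.
Qed.

Lemma dt_facts (a b c d : X) : uniq [:: a;b;c;d] ->
  let t := (tperm a b * tperm c d)%g in
  [/\ t a = b, t b = a, t c = d, t d = c & forall y, y \notin [:: a;b;c;d] -> t y = y].
Proof.
move=> U; move: (U); rewrite /= ?inE ?negb_or => U'; break_and.
split; rewrite ?permM; tsimp => //.
move=> y; rewrite !inE !negb_or => H; break_and.
by rewrite permM; tsimp.
Qed.


Lemma no5 s (l : seq X) : #|supp s| = 4 -> uniq l -> all (mem (supp s)) l -> size l = 5 -> False.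
Proof. by move=> C U /allP Sub Sz; have := size_le_supp U Sub; rewrite C Sz. Qed.

Lemma dbl s v : #|supp s| = 4 -> v \in supp s -> s (s v) = v ->
  exists a, uniq [:: v; s v; a; s a] /\ s = (tperm v (s v) * tperm a (s a))%g.
Proof.
move=> C Hv Hsv; set p := s v in Hsv *.
have Hp : p \in supp s by apply: supp_img.
have pv : p != v by rewrite inE in Hv.
have [a Ha Hal] : exists2 a, a \in supp s & a \notin [:: v; p] by apply: extra_elt; rewrite C.
set b := s a; have Hb : b \in supp s by apply: supp_img.
move: Hal; rewrite !inE negb_or => /andP [av ap].
have ba : b != a by rewrite inE in Ha.
have bv : b != v by apply: contra ap => /eqP E; apply/eqP; apply: (@perm_inj _ s); rewrite -/b E Hsv.
have bp : b != p by apply: contra av => /eqP E; apply/eqP; apply: (@perm_inj _ s); rewrite -/b E.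
have U : uniq [:: v;p;a;b] by rewrite /= !inE !negb_or; neqs.
have Sub : {subset [:: v;p;a;b] <= supp s} by apply/allP; rewrite /= Hv Hp Ha Hb.
have sb : s b = a.
  have := in4 C U Sub (supp_img Hb); rewrite !inE => /or4P [] /eqP E //.
  - by move: bp; rewrite -(inj_eq (@perm_inj _ s)) E Hsv eqxx.
  - by move: bv; rewrite -(inj_eq (@perm_inj _ s)) E eqxx.
  - by move: Hb; rewrite inE E eqxx.
exists a; split => //; apply/permP => y; rewrite permM.
case: (boolP (y \in supp s)) => Hy.
  by move: (in4 C U Sub Hy); rewrite !inE => /or4P [] /eqP ->; tsimp; rewrite ?Hsv ?sb.
have fy : s y = y by move: Hy; rewrite inE negbK => /eqP.
have yv : y != v by apply: contraNneq Hy => ->.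
have yp : y != p by apply: contraNneq Hy => ->.
have ya : y != a by apply: contraNneq Hy => ->.
have yb : y != b by apply: contraNneq Hy => ->.
by rewrite fy; tsimp.
Qed.


Lemma cyc s v : #|supp s| = 4 -> v \in supp s -> s (s v) != v ->
  [/\ uniq [:: v; s v; s (s v); s (s (s v))], s (s (s (s v))) = v &
     s = (tperm v (s v) * tperm v (s (s v)) * tperm v (s (s (s v))))%g].
Proof.
move=> C Hv xv; set p := s v in xv *; set x := s p in xv *; set q := s x.
have Hp : p \in supp s by apply: supp_img.
have Hx : x \in supp s by apply: supp_img.
have Hq : q \in supp s by apply: supp_img.
have pv : p != v by rewrite inE in Hv.
have xp : x != p by rewrite inE in Hp.
have qx : q != x by rewrite inE in Hx.
have qp : q != p by apply: contra xv => /eqP E; apply/eqP; apply: (@perm_inj _ s).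
have qv : q != v.
  apply/negP => /eqP qv.
  have [y Hy Hyl] : exists2 y, y \in supp s & y \notin [:: v; p; x] by apply: extra_elt; rewrite C.
  move: Hyl; rewrite !inE !negb_or => /andP [yv /andP [yp yx]].
  have Hsy := supp_img Hy.
  have syy : s y != y by rewrite inE in Hy.
  have syp : s y != p by rewrite -(inj_eq (@perm_inj _ s)) in yv.
  have syx : s y != x by rewrite -(inj_eq (@perm_inj _ s)) in yp.
  have syv : s y != v by rewrite -qv; move: yx; rewrite -(inj_eq (@perm_inj _ s)).
  apply: (@no5 s [:: v; p; x; y; s y]) => //.
    by rewrite /= !inE !negb_or; neqs.
  by rewrite /= Hv Hp Hx Hy Hsy.
have U : uniq [:: v;p;x;q] by rewrite /= !inE !negb_or; neqs.
have Sub : {subset [:: v;p;x;q] <= supp s} by apply/allP; rewrite /= Hv Hp Hx Hq.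
have sq : s q = v.
  have := in4 C U Sub (supp_img Hq); rewrite !inE => /or4P [] /eqP E //.
  - by move: qv; rewrite -(inj_eq (@perm_inj _ s)) E eqxx.
  - by move: qp; rewrite -(inj_eq (@perm_inj _ s)) E eqxx.
  - by move: Hq; rewrite inE E eqxx.
split => //; apply/permP => y; rewrite !permM.
case: (boolP (y \in supp s)) => Hy.
  by move: (in4 C U Sub Hy); rewrite !inE => /or4P [] /eqP ->; tsimp; rewrite ?sq.
have fy : s y = y by move: Hy; rewrite inE negbK => /eqP.
have yv : y != v by apply: contraNneq Hy => ->.
have yp : y != p by apply: contraNneq Hy => ->.
have yx : y != x by apply: contraNneq Hy => ->.
have yq : y != q by apply: contraNneq Hy => ->.
by rewrite fy; tsimp.
Qed.

Lemma sign4 s : #|supp s| = 4 -> odd_perm s = ((s * s)%g != 1%g).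
Proof.
move=> C.
have [v Hv] : exists v, v \in supp s.
  have [v Hv _] : exists2 v, v \in supp s & v \notin [::] by apply: extra_elt; rewrite C.
  by exists v.
case: (eqVneq (s (s v)) v) => Hsv.
  have [a [U E]] := dbl C Hv Hsv.
  move: (U); rewrite /= !inE !negb_or => U'; break_and.
  have [t1 t2 t3 t4 t5] := dt_facts U.
  have Es : forall y, s y = (tperm v (s v) * tperm a (s a))%g y by move=> y; rewrite {1}E.
  rewrite {1}E odd_permM !odd_tperm; neqs; rewrite /=.
  apply/esym/negbF/eqP/permP => y; rewrite !permM perm1.
  case: (boolP (y \in [:: v; s v; a; s a])) => Hy.
    move: Hy; rewrite !inE => /or4P [] /eqP ->; rewrite ?Hsv //.
      by rewrite (Es (s a)) t4.
    by rewrite (Es (s a)) t4.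
  by rewrite (Es y) (t5 _ Hy) (Es y) (t5 _ Hy).
have [U Sq E] := cyc C Hv Hsv.
move: (U); rewrite /= !inE !negb_or => U'; break_and.
apply/idP/idP => _.
  apply/eqP => /permP /(_ v); rewrite permM perm1 => E'.
  by move: Hsv; rewrite E' eqxx.
rewrite E !odd_permM !odd_tperm; neqs; done.
Qed.

End Perm4.

Lemma coef4 n (M : 'M[int]_n) : (forall i, M i i = 0) -> (4 <= n)%N ->
  (char_poly M)`_(n - 4) =
  \sum_(s : 'S_n | #|supp s| == 4%N) (-1) ^+ s * \prod_(i in supp s) M i (s i).
Proof.
move=> M0 n4.
rewrite /char_poly /determinant coef_sum [RHS]big_mkcond /=; apply: eq_bigr => s _.
rewrite -(rmorph_sign polyC) coefCM.
have -> : \prod_i (char_poly_mx M) i (s i) =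
   'X^#|[pred i | s i == i]| * (\prod_(i in supp s) - M i (s i))%:P.
  rewrite (bigID (fun i => s i == i)) /= rmorph_prod; congr (_ * _).
    rewrite -prodr_const; apply: eq_big => [i|i /eqP Hi]; first by [].
    by rewrite !mxE Hi eqxx M0 subr0.
  apply: eq_big => [i|i Hi]; first by rewrite inE.
  by rewrite !mxE eq_sym (negbTE Hi) sub0r rmorphN.
have Hc : #|[pred i | s i == i]| = (n - #|supp s|)%N.
  have E := cardC (mem (supp s)); rewrite card_ord in E.
  have -> : #|[pred i | s i == i]| = #|[predC (mem (supp s))]|.
    by apply: eq_card => i; rewrite !inE negbK.
  have Hk : (#|supp s| <= n)%N by have := max_card (mem (supp s)); rewrite card_ord.
  by apply: (@addnI #|supp s|); rewrite subnKC.
rewrite coefXnM coefC Hc.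
case: (eqVneq #|supp s| 4%N) => H4.
  rewrite H4 ltnn subnn eqxx prodrN H4 /=.
  by have -> : ((-1) ^+ 4 : int) = 1 by []; rewrite mul1r.
have Hk : (#|supp s| <= n)%N by have := max_card (mem (supp s)); rewrite card_ord.
case: ltnP => H1; first by rewrite mulr0.
case: eqP => H2; last by rewrite mulr0.
have : #|supp s| = 4%N by lia.
by move/eqP; rewrite (negbTE H4).
Qed.

Section Transfer.
Variables (T : finType) (S : {set T}) (x0 : T) (H0 : x0 \in S).

Definition liftf (s : 'S_#|S|) : T -> T :=
  fun x => if x \in S then enum_val (s (enum_rank_in H0 x)) else x.

Lemma liftf_inj s : injective (liftf s).
Proof.
move=> x y; rewrite /liftf.
case: (boolP (x \in S)) => Hx; case: (boolP (y \in S)) => Hy.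
- move/enum_val_inj/perm_inj => E.
  by rewrite -(enum_rankK_in H0 Hx) -(enum_rankK_in H0 Hy) E.
- by move=> E; move: Hy; rewrite -E enum_valP.
- by move=> E; move: Hx; rewrite E enum_valP.
- by [].
Qed.

Definition liftp s : {perm T} := perm (@liftf_inj s).

Lemma liftp_val s i : liftp s (enum_val i) = enum_val (s i).
Proof. by rewrite permE /liftf enum_valP enum_valK_in. Qed.

Lemma liftp_out s x : x \notin S -> liftp s x = x.
Proof. by rewrite permE /liftf => /negbTE ->. Qed.

Lemma liftp_inj : injective liftp.
Proof.
move=> s t E; apply/permP => i; apply: enum_val_inj.
by rewrite -!liftp_val E.
Qed.

Lemma liftpM s t : liftp (s * t)%g = (liftp s * liftp t)%g.
Proof.
apply/permP => x; rewrite !permM.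
case: (boolP (x \in S)) => Hx; last by rewrite !liftp_out.
by rewrite -(enum_rankK_in H0 Hx) !liftp_val permM.
Qed.

Lemma liftp1 : liftp 1%g = 1%g.
Proof.
apply/permP => x; rewrite perm1.
case: (boolP (x \in S)) => Hx; last by rewrite !liftp_out.
by rewrite -(enum_rankK_in H0 Hx) !liftp_val perm1.
Qed.

Lemma supp_liftp s : supp (liftp s) = [set enum_val i | i in supp s].
Proof.
apply/setP => x; rewrite [in LHS]inE.
case: (boolP (x \in S)) => Hx.
  rewrite -(enum_rankK_in H0 Hx) liftp_val mem_imset; last exact: enum_val_inj.
  by rewrite inE (inj_eq enum_val_inj).
rewrite liftp_out // eqxx; apply/esym/negbTE; apply: contra Hx.
by case/imsetP => i _ ->; rewrite enum_valP.
Qed.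

Lemma card_supp_liftp s : #|supp (liftp s)| = #|supp s|.
Proof. by rewrite supp_liftp card_imset //; exact: enum_val_inj. Qed.

Lemma supp_sub_liftp s : supp (liftp s) \subset S.
Proof. by rewrite supp_liftp; apply/subsetP => x /imsetP [i _ ->]; rewrite enum_valP. Qed.

Lemma liftp_surj (g : {perm T}) : supp g \subset S -> exists s, liftp s = g.
Proof.
move=> Hg.
have gS : forall y, y \in S -> g y \in S.
  move=> y Hy; case: (boolP (y \in supp g)) => Hs.
    by apply: (subsetP Hg); apply: supp_img.
  by move: Hs; rewrite inE negbK => /eqP ->.
have inj : injective (fun i : 'I_#|S| => enum_rank_in H0 (g (enum_val i))).
  move=> i j E; apply/enum_val_inj/(@perm_inj _ g).
  by rewrite -(enum_rankK_in H0 (gS _ (enum_valP i))) E enum_rankK_in // gS // enum_valP.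
exists (perm inj); apply/permP => x.
case: (boolP (x \in S)) => Hx.
  by rewrite -(enum_rankK_in H0 Hx) liftp_val permE enum_rankK_in // gS // enum_valP.
rewrite liftp_out //; apply/esym/eqP; apply: contraNT Hx => Hgx.
by apply: (subsetP Hg); rewrite inE.
Qed.

End Transfer.

Definition F (T : finType) (e : rel T) (S : {set T}) : int :=
  \sum_(g : {perm T} | (supp g \subset S) && (#|supp g| == 4%N))
     (-1) ^+ g * \prod_(x in supp g) (e x (g x))%:R.

Lemma a4F (T : finType) (e : rel T) (e_irr : irreflexive e) (S : {set T}) :
  a4 e S = F e S.
Proof.
rewrite /a4 /F; case: (boolP (4 <= #|S|)%N) => n4; last first.
  rewrite big_pred0 // => g; apply/negbTE; rewrite negb_and.
  case: (boolP (supp g \subset S)) => //= /subset_leq_card H.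
  by apply/eqP => E; move: H; rewrite E; move: n4; rewrite -ltnNge => n4 H; lia.
have [x0 H0] : exists x0, x0 \in S.
  have [x0 Hx0 _] : exists2 x0, x0 \in S & x0 \notin [::] by apply: extra_elt; apply: leq_trans n4.
  by exists x0.
rewrite coef4 //; last by move=> i; rewrite mxE e_irr.
have -> : \sum_(s : 'S_#|S| | #|supp s| == 4%N)
      (-1) ^+ s * \prod_(i in supp s) (adjmx e S) i (s i) =
    \sum_(s : 'S_#|S| | #|supp s| == 4%N)
      (-1) ^+ (liftp H0 s) * \prod_(x in supp (liftp H0 s)) (e x (liftp H0 s x))%:R.
  apply: eq_bigr => s /eqP C4; congr (_ * _).
    rewrite (sign4 C4) sign4; last by rewrite card_supp_liftp.
    by rewrite -liftpM -(liftp1 H0) (inj_eq (@liftp_inj _ _ _ H0)).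
  rewrite supp_liftp big_imset /=; last by move=> i j _ _; exact: enum_val_inj.
  by apply: eq_bigr => i _; rewrite mxE liftp_val.
pose G (g : {perm T}) := (-1) ^+ g * \prod_(x in supp g) (e x (g x))%:R : int.
transitivity (\sum_(g in [set liftp H0 s | s in [pred s : 'S_#|S| | #|supp s| == 4%N]]) G g).
  rewrite big_imset /=; last by move=> s t _ _; exact: liftp_inj.
  by apply: eq_bigl => s; rewrite inE.
apply: eq_bigl => g; apply/imsetP/andP.
  by case=> s; rewrite inE => /eqP C ->; rewrite supp_sub_liftp card_supp_liftp C.
case=> Hg /eqP C; have [s Es] := liftp_surj H0 Hg.
by exists s; rewrite // inE -(card_supp_liftp H0) Es C.
Qed.

Lemma dt_props (X : finType) (a b c d : X) : uniq [:: a;b;c;d] ->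
  (supp (tperm a b * tperm c d)%g =i [:: a;b;c;d]) /\
  ((tperm a b * tperm c d) * (tperm a b * tperm c d) = 1)%g.
Proof.
move=> U; have [t1 t2 t3 t4 t5] := dt_facts U.
move: (U); rewrite /= !inE !negb_or => U'; break_and.
split.
  move=> y; case: (boolP (y \in [:: a;b;c;d])) => Hy; rewrite inE.
    by move: Hy; rewrite !inE => /or4P [] /eqP ->; rewrite ?t1 ?t2 ?t3 ?t4; neqs.
  by rewrite t5 // eqxx.
apply/permP => y; rewrite permM perm1.
case: (boolP (y \in [:: a;b;c;d])) => Hy.
  by move: Hy; rewrite !inE => /or4P [] /eqP ->; rewrite ?t1 ?t2 ?t3 ?t4.
by rewrite !t5.
Qed.

Lemma dbl_inv (X : finType) (g : {perm X}) v : #|supp g| = 4%N -> v \in supp g ->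
  g (g v) = v -> (g * g = 1)%g.
Proof.
move=> C Hv Hs; have [a [U E]] := dbl C Hv Hs.
move: (U); rewrite /= !inE !negb_or => U'; break_and.
have : odd_perm g = false by rewrite E odd_permM !odd_tperm; neqs.
by rewrite sign4 // => /negbFE/eqP.
Qed.

Lemma prod_bool (X : finType) (A : {set X}) (P : pred X) :
  \prod_(x in A) (P x)%:R = ([forall x in A, P x]%:R : int).
Proof.
case: (boolP [forall x in A, P x]) => H.
  by rewrite big1 // => x Hx; move/forall_inP: H => /(_ x Hx) ->.
move/forall_inPn: H => [x Hx HP].
by rewrite (bigD1 x) //= (negbTE HP) mul0r.
Qed.

Section Main.
Variables (T : finType) (e : rel T) (e_sym : symmetric e) (v : T) (hv : (deg e v <= 2)%N).

Definition ok (g : {perm T}) :=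
  [&& v \in supp g, #|supp g| == 4%N & [forall x in supp g, e x (g x)]].

Definition hmap (g : {perm T}) := (tperm v (g v) * tperm (g (g v)) (g (g (g v))))%g.

Lemma B_facts g : ok g -> (g * g != 1)%g ->
  [/\ uniq [:: v; g v; g (g v); g (g (g v))], g (g (g (g v))) = v,
     g = (tperm v (g v) * tperm v (g (g v)) * tperm v (g (g (g v))))%g,
     e v (g v) & e (g (g v)) (g (g (g v))) /\ e v (g (g (g v)))].
Proof.
case/and3P => Hv /eqP C /forall_inP Ed Hgg.
have Hs : g (g v) != v by apply: contra Hgg => /eqP E; apply/eqP; exact: dbl_inv C Hv E.
have [U Sq E] := cyc C Hv Hs.
have Sub : {subset [:: v; g v; g (g v); g (g (g v))] <= supp g}.
  by apply/allP; rewrite /= Hv !supp_img.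
split => //.
- by apply: Ed.
split; first by apply: Ed; apply: Sub; rewrite !inE eqxx !orbT.
by rewrite e_sym -[X in e _ X]Sq; apply: Ed; apply: Sub; rewrite !inE eqxx !orbT.
Qed.

Lemma hmap_A g : ok g -> (g * g != 1)%g -> ok (hmap g) && (hmap g * hmap g == 1)%g.
Proof.
move=> Og Hgg; have [U Sq E ev1 [ex eq]] := B_facts Og Hgg.
have [Sp Inv] := dt_props U.
have [t1 t2 t3 t4 t5] := dt_facts U.
rewrite /ok /hmap Inv eqxx andbT Sp !inE eqxx /=.
have -> : #|supp (tperm v (g v) * tperm (g (g v)) (g (g (g v))))%g| = 4%N.
  by rewrite (eq_card Sp) (card_uniqP U).
apply/forall_inP => y; rewrite Sp !inE => /or4P [] /eqP ->;
  rewrite ?t1 ?t2 ?t3 ?t4 //; by rewrite e_sym.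
Qed.

Lemma hmap_inj : {in [pred g | ok g && (g * g != 1)%g] &, injective hmap}.
Proof.
move=> g1 g2; rewrite !inE => /andP [O1 H1] /andP [O2 H2] Eh.
have [U1 S1 E1 a1 [b1 c1]] := B_facts O1 H1.
have [U2 S2 E2 a2 [b2 c2]] := B_facts O2 H2.
have [t1 t2 t3 t4 t5] := dt_facts U1.
have [u1 u2 u3 u4 u5] := dt_facts U2.
have Hp : g1 v = g2 v by have := congr1 (fun h : {perm T} => h v) Eh; rewrite /= /hmap t1 u1.
have Hq : g1 (g1 (g1 v)) = g2 (g2 (g2 v)).
  apply/eqP; apply/negPn/negP => Hne.
  have Uq : uniq [:: g1 v; g1 (g1 (g1 v)); g2 (g2 (g2 v))].
    have n1 : g1 v != g1 (g1 (g1 v)) by move: (U1); rewrite /= !inE !negb_or => V; break_and.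
    have n2 : g2 v != g2 (g2 (g2 v)) by move: (U2); rewrite /= !inE !negb_or => V; break_and.
    by rewrite /= !inE !negb_or n1 Hne /= !andbT Hp.
  have : (size [:: g1 v; g1 (g1 (g1 v)); g2 (g2 (g2 v))] <= deg e v)%N.
    rewrite -(card_uniqP Uq); apply: subset_leq_card; apply/subsetP => z.
    by rewrite !inE; case/or3P => /eqP ->.
  by move=> H; move: (leq_trans H hv).
have Hx : g1 (g1 v) = g2 (g2 v).
  have := congr1 (fun h : {perm T} => h (g1 (g1 (g1 v)))) Eh.
  by rewrite /= /hmap t4 Hq u4.
rewrite [LHS]E1 [RHS]E2 Hq Hx Hp //.
Qed.

Lemma main_pos :
  (0 : int) <= \sum_(g : {perm T} | (supp g \subset [set: T]) && (#|supp g| == 4%N) && (v \in supp g))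
        (-1) ^+ g * \prod_(x in supp g) (e x (g x))%:R.
Proof.
set A := [set g : {perm T} | ok g && (g * g == 1)%g].
set B := [set g : {perm T} | ok g && (g * g != 1)%g].
have -> : \sum_(g : {perm T} | (supp g \subset [set: T]) && (#|supp g| == 4%N) && (v \in supp g))
        (-1) ^+ g * \prod_(x in supp g) (e x (g x))%:R =
        \sum_(g : {perm T}) ((g \in A)%:R - (g \in B)%:R : int).
  rewrite big_mkcond /=; apply: eq_bigr => g _.
  rewrite subsetT /= [_ \in A]inE [_ \in B]inE /ok.
  case: (boolP (v \in supp g)) => Hv; rewrite ?andbF ?andFb /= ?subrr //.
  case: (boolP (#|supp g| == 4%N)) => C4 /=; rewrite ?andFb /= ?subrr //.
  rewrite prod_bool sign4; last exact/eqP.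
  case: [forall x in supp g, e x (g x)]; rewrite /= ?mulr0 ?subrr //.
  by case: eqP; rewrite /= ?mulr1 ?subr0 ?sub0r ?expr1 ?expr0.
have cnt : forall C : {set {perm T}}, \sum_(g : {perm T}) ((g \in C)%:R : int) = #|C|%:R.
  move=> C; transitivity (\sum_(g in C) (1 : int)); last by rewrite sumr_const.
  by rewrite [RHS]big_mkcond; apply: eq_bigr => g _; case: (g \in C).
rewrite sumrB !cnt subr_ge0 ler_nat.
have Hinj : {in B &, injective hmap}.
  by move=> g1 g2 H1 H2; apply: hmap_inj; [move: H1 | move: H2]; rewrite !inE.
rewrite -(card_in_imset Hinj); apply: subset_leq_card.
apply/subsetP => h /imsetP [g]; rewrite inE => /andP [Og Hg] ->.
by rewrite inE hmap_A.
Qed.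

End Main.

Theorem theorem4p3 (T : finType) (e : rel T) (e_sym : symmetric e)
  (e_irr : irreflexive e) (v : T) (hv : (deg e v <= 2)%N) :
  a4 e ([set: T] :\ v) <= a4 e [set: T].
Proof.
rewrite !a4F // /F.
rewrite [X in _ <= X](bigID (fun g : {perm T} => v \in supp g)) /=.
have -> : \sum_(g : {perm T} | (supp g \subset [set: T] :\ v) && (#|supp g| == 4%N))
      ((-1) ^+ g * \prod_(x in supp g) (e x (g x))%:R : int) =
    \sum_(g : {perm T} | (supp g \subset [set: T]) && (#|supp g| == 4%N) && ~~ (v \in supp g))
      ((-1) ^+ g * \prod_(x in supp g) (e x (g x))%:R : int).
  by apply: eq_bigl => g; rewrite subsetD1 andbAC.
by rewrite lerDr main_pos.
Qed.
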